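(* Let $\widetilde{\mathcal A}_{\mathrm{loc}}=\widetilde{\mathcal A}\otimes_{\mathbb Z[q_1^{\pm1},q_2^{\pm1}]}\mathbb Q(q_1,q_2)$. Then $\widetilde{\mathcal A}_{\mathrm{loc}}$ is generated as a $\mathbb Q(q_1,q_2)$-algebra by the elements $\mathscr E_{(m)}$, $m\in\mathbb Z$ (the generators indexed by vectors of length one). Equivalently, the algebra homomorphism $\mathcal U\otimes\mathbb Q(q_1,q_2)\to\widetilde{\mathcal A}_{\mathrm{loc}}$, $E_m\mapsto\mathscr E_{(m)}$, is surjective.
   Context: $\widetilde{\mathcal A}$ is the $\mathbb Z[q_1^{\pm1},q_2^{\pm1}]$-algebra generated by symbols $\mathscr E_{(d_1,\dots,d_n)}$ ($n\ge1$, $d_i\in\mathbb Z$) modulo the relations: for all $d_1,\dots,d_n$ and $1\le i<n$, $\mathscr E_{(d_1,\dots,d_i,d_{i+1},\dots,d_n)}-q_1q_2\mathscr E_{(d_1,\dots,d_i-1,d_{i+1}+1,\dots,d_n)}=(1-q_1)\mathscr E_{(d_1,\dots,d_i)}\mathscr E_{(d_{i+1},\dots,d_n)}$; and for all $d_1,\dots,d_n,k$, $[\mathscr E_{(k)},\mathscr E_{(d_1,\dots,d_n)}]=(q_2-1)\sum_{i=1}^nc_i$ with $c_i=\sum_{a=1}^{k-d_i}\mathscr E_{(d_1,\dots,d_{i-1},k-a,d_i+a,d_{i+1},\dots,d_n)}$ if $k\ge d_i$ and $c_i=-\sum_{a=1}^{d_i-k}\mathscr E_{(d_1,\dots,d_{i-1},d_i-a,k+a,d_{i+1},\dots,d_n)}$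 if $k\le d_i$. $\mathcal U$ is the $\mathbb Z[q_1^{\pm1},q_2^{\pm1}]$-algebra generated by $E_m$ ($m\in\mathbb Z$), with $E(z)=\sum_mE_mz^{-m}$, modulo $E(z)E(w)(z-wq_1)(z-wq_2)(z-\tfrac{w}{q_1q_2})=E(w)E(z)(zq_1-w)(zq_2-w)(\tfrac{z}{q_1q_2}-w)$ and $[[E_{m+1},E_{m-1}],E_m]=0$; the homomorphism $E_m\mapsto\mathscr E_{(m)}$ to $\widetilde{\mathcal A}$ is well defined. *)

(* Defs.v *)
From HB Require Import structures.
From mathcomp Require Import all_boot all_order all_algebra.
From mathcomp Require Import fraction.
From mathcomp.multinomials Require Import monalg.

Set Implicit Arguments.
Unset Strict Implicit.
Unset Printing Implicit Defensive.

Import Order.TTheory GRing.Theory Num.Theory.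
Local Open Scope ring_scope.

(* The coefficient field Q(q1,q2), realised as the fraction field of
   Q[q1][q2] = {poly {poly rat}}. *)
Definition Lfield : fieldType := {fraction {poly {poly rat}}}.

Definition q1 : Lfield := tofrac (('X : {poly rat})%:P).
Definition q2 : Lfield := tofrac ('X : {poly {poly rat}}).

(* Generators E_(d_1,...,d_n), n >= 1, are indexed by nonempty integer
   vectors, encoded as (d_1, [:: d_2; ...; d_n]). *)
Definition genIdx : choiceType := (int * seq int)%type.

(* The free (noncommutative) Q(q1,q2)-algebra on the symbols E_d:
   the monoid algebra of the free monoid on genIdx. *)
Definition FA := {malg Lfield[{fmonom genIdx}]}.

(* The symbol E_d for a nonempty vector d (value 0 on the empty vector,
   which never occurs in the relations below). *)
Definition E (d : seq int) : FA :=
  match d with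
  | x :: s => << fmu (x, s) >>
  | [::] => 0
  end.

Definition rel1 (a : seq int) (x y : int) (b : seq int) : FA :=
  E (a ++ x :: y :: b) - (q1 * q2) *: E (a ++ (x - 1) :: (y + 1) :: b)
  - (1 - q1) *: (E (rcons a x) * E (y :: b)).

Definition cterm (k : int) (a : seq int) (x : int) (b : seq int) : FA :=
  if x <= k then
    \sum_(1 <= j < (absz (k - x)).+1) E (a ++ (k - j%:Z) :: (x + j%:Z) :: b)
  else
    - \sum_(1 <= j < (absz (x - k)).+1) E (a ++ (x - j%:Z) :: (k + j%:Z) :: b).

Definition rel2 (k : int) (d : seq int) : FA :=
  (E [:: k] * E d - E d * E [:: k])
  - (q2 - 1) *: \sum_(i < size d) cterm k (take i d) (nth 0 d i) (drop i.+1 d).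

Definition rels (r : FA) : Prop :=
  (exists a x y b, r = rel1 a x y b) \/
  (exists k d, d <> [::] /\ r = rel2 k d).

Inductive in_ideal (S : FA -> Prop) : FA -> Prop :=
  | ideal_gen r : S r -> in_ideal S r
  | ideal_0 : in_ideal S 0
  | ideal_add u v : in_ideal S u -> in_ideal S v -> in_ideal S (u + v)
  | ideal_mull c u : in_ideal S u -> in_ideal S (c * u)
  | ideal_mulr u c : in_ideal S u -> in_ideal S (u * c).

Inductive in_subalg_Em : FA -> Prop :=
  | sub_scal (c : Lfield) : in_subalg_Em (c%:MP)
  | sub_gen (m : int) : in_subalg_Em (E [:: m])
  | sub_add u v : in_subalg_Em u -> in_subalg_Em v -> in_subalg_Em (u + v)
  | sub_mul u v : in_subalg_Em u -> in_subalg_Em v -> in_subalg_Em (u * v).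

(* A~_loc = FA / (ideal generated by rels); "u = v in A~_loc": *)
Definition Aloc_eq (u v : FA) : Prop := in_ideal rels (u - v).

(* Main.v *)
Require Import Defs.
From HB Require Import structures.
From mathcomp Require Import all_boot all_order all_algebra.
From mathcomp Require Import fraction.
From mathcomp.multinomials Require Import monalg.
From mathcomp Require Import zify ring lra.
Set Implicit Arguments.
Unset Strict Implicit.
Unset Printing Implicit Defensive.
Import Order.TTheory GRing.Theory Num.Theory.
Local Open Scope ring_scope.



Definition good (u : FA) := exists v, in_subalg_Em v /\ Aloc_eq u v.

Lemma ideal_opp u : in_ideal rels u -> in_ideal rels (- u).
Proof. by move=> h; rewrite -mulN1r; apply: ideal_mull. Qed.

Lemma good_ideal u : in_ideal rels u -> good u.
Proof.
move=> h; exists 0; split; last by rewrite /Aloc_eq subr0.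
by rewrite -malgC0E; apply: sub_scal.
Qed.

Lemma good_add u w : good u -> good w -> good (u + w).
Proof.
move=> [v1 [s1 h1]] [v2 [s2 h2]]; exists (v1 + v2); split; first exact: sub_add.
rewrite /Aloc_eq (_ : _ - _ = (u - v1) + (w - v2)); first exact: ideal_add.
by rewrite opprD addrACA.
Qed.

Lemma good_mul u w : good u -> good w -> good (u * w).
Proof.
move=> [v1 [s1 h1]] [v2 [s2 h2]]; exists (v1 * v2); split; first exact: sub_mul.
rewrite /Aloc_eq (_ : _ - _ = (u - v1) * w + v1 * (w - v2)).
  by apply: ideal_add; [apply: ideal_mulr|apply: ideal_mull].
by rewrite mulrBl mulrBr addrA subrK.
Qed.

Lemma good_C c : good (c%:MP).
Proof. exists c%:MP; split; [exact: sub_scal| by rewrite /Aloc_eq subrr; apply: ideal_0]. Qed.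

Lemma good_scale c u : good u -> good (c *: u).
Proof. by move=> h; rewrite -mul_malgC; apply: good_mul => //; apply: good_C. Qed.

Lemma good_opp u : good u -> good (- u).
Proof. by move=> h; rewrite -scaleN1r; apply: good_scale. Qed.

Lemma good_sub u w : good u -> good w -> good (u - w).
Proof. by move=> h1 h2; apply: good_add => //; apply: good_opp. Qed.

Lemma good_0 : good 0.
Proof. by apply: good_ideal; apply: ideal_0. Qed.

Lemma good_sum (T : Type) (r : seq T) (F : T -> FA) :
  (forall i, good (F i)) -> good (\sum_(i <- r) F i).
Proof. move=> h; elim: r => [|x r IH]; first by rewrite big_nil; apply: good_0.
by rewrite big_cons; apply: good_add. Qed.

Lemma good_tr u w : good (u - w) -> good w -> good u.
Proof. by move=> h1 h2; rewrite -(subrK w u); apply: good_add. Qed.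

Lemma good_unscale c u : c != 0 -> good (c *: u) -> good u.
Proof. by move=> c0 h; rewrite -(scalerK c0 u); apply: good_scale. Qed.

Lemma EU (i : genIdx) : << fmu i >> = E (i.1 :: i.2) :> FA.
Proof. by case: i. Qed.

Lemma malgUM (a b : {fmonom genIdx}) : << mmul a b >> = << a >> * << b >> :> FA.
Proof. by rewrite malgM_def fgmulUU mulr1. Qed.

Lemma good_monom (k : {fmonom genIdx}) :
  (forall d, good (E d)) -> good (<< k >> : FA).
Proof.
move=> hE; case: k => s; elim: s => [|i s IH].
  rewrite (_ : FMonom [::] = mone); first exact: (good_C 1).
  by apply/val_inj; rewrite /= fm1.
rewrite (_ : FMonom (i :: s) = mmul (fmu i) (FMonom s)); last first.
  by apply/val_inj; rewrite /= fmM fmU.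
by rewrite malgUM EU; apply: good_mul.
Qed.

Lemma good_all u : (forall d, good (E d)) -> good u.
Proof.
move=> hE; rewrite (monalgE u); apply: good_sum => k.
rewrite (_ : << u@_k *g k >> = u@_k *: << k >>); first by apply: good_scale; apply: good_monom.
by rewrite -mul_malgC malgM_def fgmulUU mulr1 mul1m.
Qed.



Lemma q1_neq0 : q1 != 0.
Proof. rewrite /q1 tofrac_eq0 polyC_eq0 polyX_eq0. done. Qed.
Lemma q2_neq0 : q2 != 0.
Proof. rewrite /q2 tofrac_eq0 polyX_eq0. done. Qed.
Lemma t_neq0 : q1 * q2 != 0.
Proof. rewrite mulf_neq0 //. exact: q1_neq0. exact: q2_neq0. Qed.

Fixpoint P (m : nat) : Lfield := if m is m'.+1 then 1 + q1 * q2 * P m' else 0.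
Fixpoint Pp (m : nat) : {poly {poly rat}} :=
  if m is m'.+1 then 1 + ('X%:P * 'X) * Pp m' else 0.

Lemma PE m : P m = tofrac (Pp m).
Proof.
elim: m => [|m IH] /=; first by rewrite tofrac0.
by rewrite IH tofracD tofracM tofrac1 tofracM.
Qed.

Lemma Pp0 m : (Pp m.+1).[0] = 1.
Proof. rewrite [Pp _]/= !hornerE. reflexivity. Qed.

Lemma Pnz m : (q2 - 1) * P m.+1 != 0.
Proof.
rewrite PE /q2 -tofrac1 -tofracB -tofracM tofrac_eq0.
apply/negP => /eqP H.
have := congr1 (fun p => p.[0]) H.
rewrite hornerM Pp0 mulr1 hornerD hornerX hornerN hornerC horner0 add0r.
by move/eqP; rewrite oppr_eq0 oner_eq0.
Qed.



Definition IHn (n : nat) := forall d, (size d < n)%N -> good (E d).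

Lemma move n (IH : IHn n) a x y b : (size a + (size b).+2 = n)%N ->
  good (E (a ++ x :: y :: b) - (q1 * q2) *: E (a ++ (x - 1) :: (y + 1) :: b)).
Proof.
move=> hs.
have hr : good (rel1 a x y b).
  by apply: good_ideal; apply: ideal_gen; left; exists a, x, y, b.
have hw : good ((1 - q1) *: (E (rcons a x) * E (y :: b))).
  apply: good_scale; apply: good_mul; apply: IH; rewrite /= ?size_rcons; lia.
rewrite -(subrK ((1 - q1) *: (E (rcons a x) * E (y :: b))) (_ - _)).
by apply: good_add.
Qed.

Lemma st n (IH : IHn n) a b x y : (size a + (size b).+2 = n)%N ->
  good (E (a ++ (x + 1) :: y :: b)) <-> good (E (a ++ x :: (y + 1) :: b)).
Proof.
move=> hs; have hm := move IH (x + 1) y hs; rewrite addrK in hm.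
split => h.
  apply: (good_unscale t_neq0).
  set E1 := E (a ++ (x + 1) :: y :: b).
  set X := (_ *: _).
  have -> : X = E1 - (E1 - X) by rewrite opprB addrC subrK.
  exact: good_sub.
by apply: (good_tr hm); apply: good_scale.
Qed.

Lemma to_zero n (IH : IHn n) a b x y : (size a + (size b).+2 = n)%N ->
  good (E (a ++ x :: y :: b)) <-> good (E (a ++ 0 :: (x + y) :: b)).
Proof.
move=> hs.
suff H : forall k : nat, forall y,
  (good (E (a ++ k%:Z :: y :: b)) <-> good (E (a ++ 0 :: (k%:Z + y) :: b))) /\
  (good (E (a ++ (- k%:Z) :: y :: b)) <-> good (E (a ++ 0 :: (- k%:Z + y) :: b))).
  case: x => k; first exact: (H k y).1.
  by rewrite NegzE; exact: (H k.+1 y).2.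
elim => [|k IHk] y'.
  by rewrite oppr0 add0r.
split.
  rewrite (_ : k.+1%:Z = k%:Z + 1); last by lia.
  rewrite (st IH _ _ hs) (IHk (y' + 1)).1.
  by rewrite (_ : k%:Z + (y' + 1) = k%:Z + 1 + y'); last by lia.
set z := - k.+1%:Z.
have hz : z + 1 = - k%:Z by rewrite /z; lia.
have e : E (a ++ z :: y' :: b) = E (a ++ z :: (y' - 1 + 1) :: b) by rewrite subrK.
rewrite e -(st IH z (y' - 1) hs) hz (IHk (y' - 1)).2.
by rewrite (_ : - k%:Z + (y' - 1) = z + y'); last by rewrite /z; lia.
Qed.



Definition sumz (d : seq int) : int := \sum_(i <- d) i.

Lemma flatten_iff n (IH : IHn n) m : forall d a, size d = m.+1 -> (size a + m.+1 = n)%N ->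
  good (E (a ++ d)) <-> good (E (a ++ rcons (nseq m 0) (sumz d))).
Proof.
elim: m => [|m IHm] d a hd hs.
  case: d hd => [|x [|]] // _.
  rewrite /sumz big_cons big_nil addr0; exact: iff_refl.
case: d hd => [|x [|y r]] // [hr].
rewrite (to_zero IH (a := a) (b := r) x y); last by rewrite hr; lia.
rewrite -cat_rcons (IHm ((x + y) :: r) (rcons a 0)); last first.
  - by rewrite size_rcons; lia.
  - by rewrite /= hr.
rewrite cat_rcons /= /sumz !big_cons addrA.
exact: iff_refl.
Qed.

Lemma chain n (IH : IHn n) a u v m : (size a).+2 = n ->
  good (\sum_(1 <= j < m.+1) E (a ++ (u - j%:Z) :: (v + j%:Z) :: [::])
        - P m *: E (a ++ (u - m%:Z) :: (v + m%:Z) :: [::])).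
Proof.
move=> hs; elim: m => [|m IHm].
  rewrite big_geq; last exact: leqnn.
  rewrite scale0r subr0; exact: good_0.
rewrite big_nat_recr; last exact: leq0n.
rewrite [P m.+1]/=.
set S := \big[_/_]_(1 <= i < m.+1) _.
set Em := E (a ++ [:: u - m%:Z; v + m%:Z]).
set Em1 := E (a ++ [:: u - m.+1%:Z; v + m.+1%:Z]).
have hmv : good (Em - (q1 * q2) *: Em1).
  have hs' : (size a + (size ([::] : seq int)).+2 = n)%N by rewrite -hs addn2.
  have := move IH (u - m%:Z) (v + m%:Z) hs'.
  rewrite (_ : u - m%:Z - 1 = u - m.+1%:Z); last lia.
  rewrite (_ : v + m%:Z + 1 = v + m.+1%:Z); last lia.
  exact.
change (good (S + Em1 - (1 + q1 * q2 * P m) *: Em1)).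
have -> : S + Em1 - (1 + q1 * q2 * P m) *: Em1 =
          (S - P m *: Em) + P m *: (Em - (q1 * q2) *: Em1).
  rewrite scalerBr scalerA scalerDl scale1r [q1 * q2 * _]mulrC.
  rewrite opprD addrA addrK addrA subrK.
  reflexivity.
apply: good_add; first exact: IHm.
exact: good_scale.
Qed.



Lemma sum_nseq N (k : int) : sumz (nseq N k) = k *+ N.
Proof.
elim: N => [|N IH]; first by rewrite /sumz big_nil.
by rewrite /sumz /= big_cons -/(sumz _) IH mulrS.
Qed.

Lemma cterm_eq0 k a b : cterm k a k b = 0.
Proof. by rewrite /cterm lexx subrr big_geq. Qed.

Lemma step n (IH : IHn n) N : n = N.+2 -> forall s, good (E (rcons (nseq N.+1 0) s)).
Proof.
move=> hn s.
pose k : int := (absz s)%:Z + 1.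
pose K : int := k *+ N.
pose x : int := s - (k + K).
pose a := nseq N k.
have hK : 0 <= K by rewrite /K mulrn_wge0 // /k; lia.
have hs : s <= (absz s)%:Z by exact: lez_abs.
have hxk : x < k by rewrite /x /k; lia.
pose m := absz (k - x).
have hm : m%:Z = k - x by rewrite /m gez0_abs //; lia.
case hm' : m => [|m']; first by move: hm; rewrite hm'; lia.
have hd : (size (rcons a x) < n)%N by rewrite size_rcons size_nseq hn.
have hr : good (rel2 k (rcons a x)).
  apply: good_ideal; apply: ideal_gen; right; exists k, (rcons a x); split => //.
  by move/(congr1 size); rewrite size_rcons.
have hc : good (E [:: k] * E (rcons a x) - E (rcons a x) * E [:: k]).
  apply: good_sub; apply: good_mul; try exact: (IH _ hd); apply: IH; rewrite hn //.
have hsum : \sum_(i < size (rcons a x)) cterm k (take i (rcons a x)) (nth 0 (rcons a x) i) (drop i.+1 (rcons a x))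
   = \sum_(1 <= j < m.+1) E (a ++ (k - j%:Z) :: (x + j%:Z) :: [::]).
  rewrite size_rcons size_nseq big_ord_recr /=.
  rewrite big1 ?add0r; last first.
    move=> i _; rewrite nth_rcons size_nseq ltn_ord nth_nseq ltn_ord; exact: cterm_eq0.
  rewrite nth_rcons size_nseq ltnn eqxx -cats1 take_size_cat ?size_nseq //.
  rewrite drop_oversize ?size_cat ?size_nseq /=; last by rewrite addn1.
  rewrite /cterm (ltW hxk) /m.
  reflexivity.
have hS : good ((q2 - 1) *: \sum_(1 <= j < m.+1) E (a ++ (k - j%:Z) :: (x + j%:Z) :: [::])).
  rewrite -hsum.
  move: hr; rewrite /rel2 => hr.
  set C := (E [:: k] * _ - _) in hr hc.
  set X := (_ *: _) in hr *.
  have -> : X = C - (C - X) by rewrite opprB addrC subrK.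
  exact: good_sub.
have hsa : (size a).+2 = n by rewrite size_nseq hn.
have hch := chain IH k x m hsa.
pose El := E (a ++ (k - m%:Z) :: (x + m%:Z) :: [::]).
have hEl : good El.
  apply: (good_unscale (c := (q2 - 1) * P m)); first by rewrite hm'; exact: Pnz.
  set Sm := \sum_(_ <= _ < _) _ in hS hch.
  have -> : ((q2 - 1) * P m) *: El = (q2 - 1) *: Sm - (q2 - 1) *: (Sm - P m *: El).
    rewrite scalerBr opprB addrCA subrr addr0 scalerA; reflexivity.
  apply: good_sub; first exact: hS. apply: good_scale; exact: hch.
have hsz : sumz (a ++ [:: k - m%:Z; x + m%:Z]) = s.
  rewrite /sumz big_cat -/(sumz a) sum_nseq /= !big_cons big_nil -/K /x.
  lia.
have H := (@flatten_iff n IH N.+1 (a ++ [:: k - m%:Z; x + m%:Z]) [::]).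
rewrite !cat0s in H.
rewrite -hsz -H.
- exact: hEl.
- by rewrite size_cat size_nseq addn2.
- by rewrite hn.
Qed.

Lemma allE_n n : forall d, (size d < n)%N -> good (E d).
Proof.
elim: n => [|n IH] d hd; first by [].
have [hlt|] := ltnP (size d) n; first exact: IH.
move=> hge; have hsz : size d = n by apply/eqP; rewrite eqn_leq hge -ltnS hd.
case: n IH hd hge hsz => [|[|N]] IH hd hge hsz.
- by case: d hsz hd hge => // _ _ _; exact: good_0.
- case: d hsz hd hge => [|y [|]] // _ _ _.
  exists (E [:: y]); split; first exact: sub_gen.
  by rewrite /Aloc_eq subrr; exact: ideal_0.
- have H := (@flatten_iff N.+2 IH N.+1 d [::]).
  rewrite !cat0s in H.
  rewrite H; first exact: (step IH (erefl _)).
  + exact: hsz.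
  + by rewrite ?hsz.
Qed.

Theorem proposition2p13 :
  forall u : FA, exists v : FA, in_subalg_Em v /\ Aloc_eq u v.
Proof.
move=> u; apply: good_all => d.
exact: (@allE_n (size d).+1 d (ltnSn _)).
Qed.
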